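(* Let $A = L^{q_k} R^{p_k} \cdots L^{q_1} R^{p_1} \in \rm{SL}(2; \mathbb{Z})$ where $p_1, q_1, \cdots, p_k, q_k$ and $k$ are positive integers. Let $\ell= p_1 + q_1 + \cdots + p_k + q_k$ and $s$ be the slope of the eigenvectors with respect to the expanding eigenvalue $\lambda>1$ of $A$. For the pseudo-Anosov map $f_A: \Sigma_{1,1} \rightarrow \Sigma_{1,1}$ with dilatation $\lambda$, we have the following. \begin{enumerate} \item[(1)] The measured train track $(\tau_0, \mu_0)= (\tau_{[\frac{0}{1}, \frac{1}{0}]}, \left(\begin{smallmatrix} 1 \\ s \end{smallmatrix}\right))$ is suited to the stable measured lamination of $f_A$. \item[(2)] Starting with the measured train track $ (\tau_0, \mu_0)$, the first $\ell+1$ terms $$(\tau_0, \mu_0) \overset{L}{\rightharpoonup}{}^{q_k} \ \overset{R}{\rightharpoonup}{}^{p_k} \ \cdots \ \overset{L}{\rightharpoonup}{}^{q_1} \ \overset{R}{\rightharpoonup}{}^{p_1} (\tau_\ell, \mu_\ell) $$ of the maximal splitting sequence satisfies $(\tau_{\ell}, \mu_{\ell}) = f_A(\tau_0, \lambda^{-1} \mu_0)$. Thus, it forms a length $\ell$ Agol cycle of $f_A$. Moreover, $\tau_\ell=\tau_{[\frac{b}{a}, \frac{d}{c}]}$, where $\left(\begin{smallmatrix}a & c \\ b & d \end{smallmatrix}\right) = A$. \end{enumerate}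
   Context: $L= \left(\begin{smallmatrix}1 & 0 \\ 1 & 1 \end{smallmatrix}\right)$, $R= \left(\begin{smallmatrix}1 & 1 \\0 & 1\end{smallmatrix}\right)$; $f_A:\Sigma_{1,1}\to\Sigma_{1,1}$ is the homeomorphism of the once-punctured torus $\Sigma_{1,1}=(\mathbb{R}^2\setminus\mathbb{Z}^2)/\mathbb{Z}^2$ induced by the linear map $A$. The slope $s$ means $A\left(\begin{smallmatrix} 1 \\ s \end{smallmatrix}\right)=\lambda\left(\begin{smallmatrix} 1 \\ s \end{smallmatrix}\right)$. The base train track $\tau_0=\tau_{[\frac{0}{1}, \frac{1}{0}]}$ in $\Sigma_{1,1}$ is obtained from the simple closed curves of slope $0$ and $\infty$ by flattening the NW and SE right angles at their intersection; it has one large and two small branches, and the measure $\left(\begin{smallmatrix} x \\ y \end{smallmatrix}\right)$ gives weight $x$ to the horizontal small branch, $y$ to the vertical small branch. For nonnegative integers $a,b,c,d$ with $ad-bc=1$, the train track $\tau_{[\frac{b}{a},\frac{d}{c}]}$ is defined inductively from $\tau_0$: the left splitting of $\tau_{[\frac{b}{a},\frac{d}{c}]}$ at its unique large branch is $\tau_{[\frac{b+d}{a+c},\frac{d}{c}]}$ and the right splitting is $\tau_{[\frac{b}{a},\frac{b+d}{a+c}]}$; equivalently $\tau_{[\frac{b}{a},\frac{d}{c}]}=f_{\left(\begin{smallmatrix}a & c \\ b & d \end{smallmatrix}\right)}(\tau_0)$. A maximal splitting $\rightharpoonup$ splits simultaneously along all large branches of maximal weight; $\overset{L}{\rightharpoonup}$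 (resp. $\overset{R}{\rightharpoonup}$) denotes a maximal splitting consisting of left (resp. right) splittings, and an exponent means that many consecutive ones. An Agol cycle of a pseudo-Anosov $\phi$ with dilatation $\lambda$ is a segment $(\tau_n,\mu_n)\rightharpoonup^m(\tau_{n+m},\mu_{n+m})=\phi(\tau_n,\lambda^{-1}\mu_n)$ of the maximal splitting sequence from a measured train track suited to the stable measured lamination. *)

(* Defs.v *)
From HB Require Import structures.
From mathcomp Require Import all_boot all_order all_algebra.
Set Implicit Arguments. Unset Strict Implicit. Unset Printing Implicit Defensive.
Import Order.TTheory GRing.Theory Num.Theory.
Local Open Scope ring_scope.

(* A 2x2 integer matrix from entries: mat2 a b c d = (a c ; b d),
   so that tau_[b/a, d/c] is indexed by mat2 a b c d. *)
Definition mat2 (a b c d : int) : 'M[int]_2 :=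
  \matrix_(i < 2, j < 2)
    if i == 0 :> nat then (if j == 0 :> nat then a else c)
    else (if j == 0 :> nat then b else d).

Definition Lmat : 'M[int]_2 := mat2 1 1 0 1.
Definition Rmat : 'M[int]_2 := mat2 1 0 1 1.

Definition letter_mat (x : bool) : 'M[int]_2 := if x then Lmat else Rmat.

(* The word L^{q_k} R^{p_k} ... L^{q_1} R^{p_1}, with p = [:: p_1; ...; p_k],
   q = [:: q_1; ...; q_k]. *)
Definition LR_word (p q : seq nat) : seq bool :=
  flatten [seq nseq pq.2 true ++ nseq pq.1 false | pq <- rev (zip p q)].

Definition word_mat (w : seq bool) : 'M[int]_2 :=
  foldr (fun x M => letter_mat x *m M) 1%:M w.

(* The train track tau_[b/a, d/c] = f_M(tau_0) is represented by
   M = (a c; b d); tau_0 = tau_[0/1, 1/0] is the identity matrix.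
   tau_[b/a,d/c] := f_{(a c; b d)}(tau_0). *)
Definition tau (a b c d : int) : 'M[int]_2 := mat2 a b c d.
Definition tau0 : 'M[int]_2 := tau 1 0 0 1.

(* A measured train track: a track f_M(tau_0) together with the weights (x,y)
   on the images under f_M of the horizontal and the vertical small branches
   of tau_0 (the large branch has weight x + y). *)
Definition mtt (R : Type) := ('M[int]_2 * (R * R))%type.

Definition act (R : numFieldType) (M : 'M[int]_2) (v : R * R) : R * R :=
  ((M 0 0)%:~R * v.1 + (M 0 1)%:~R * v.2,
   (M 1 0)%:~R * v.1 + (M 1 1)%:~R * v.2).

(* The measured lamination carried by (f_M(tau_0), (x,y)): on tau_0 the
   weights (x,y) carry the linear measured lamination with vector (x,y)
   (slope y/x); f_M maps it to the one with vector M (x,y). *)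
Definition carried (R : numFieldType) (t : mtt R) : R * R := act t.1 t.2.

(* Stable measured lamination of the linear pseudo-Anosov f_A (paper's
   convention: f_A(L) = lambda L, leaves parallel to the expanding
   eigendirection): a nonzero eigenvector of A for an eigenvalue > 1. *)
Definition stable_lamination (R : numFieldType) (A : 'M[int]_2) (v : R * R) :=
  v != (0, 0) /\ exists lam : R, 1 < lam /\ act A v = (lam * v.1, lam * v.2).

Definition suited_to (R : numFieldType) (t : mtt R) (v : R * R) :=
  0 < t.2.1 /\ 0 < t.2.2 /\ carried t = v.

(* The action of f_A on measured train tracks: f_A(f_M(tau_0), mu) =
   (f_{AM}(tau_0), mu) (branches are carried along). *)
Definition fA (R : Type) (A : 'M[int]_2) (t : mtt R) : mtt R := (A *m t.1, t.2).

Definition scale_mtt (R : numFieldType) (c : R) (t : mtt R) : mtt R :=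
  (t.1, (c * t.2.1, c * t.2.2)).

(* Left splitting
   f_M(tau_0) -> f_{ML}(tau_0) when x < y (new weights (x, y - x));
   right splitting f_M(tau_0) -> f_{MR}(tau_0) when y < x (weights (x - y, y));
   when x = y the split would be central: no maximal splitting of this kind. *)
Definition max_split (R : realDomainType) (t : mtt R) : option (bool * mtt R) :=
  let: (M, (x, y)) := t in
  if x < y then Some (true, (M *m Lmat, (x, y - x)))
  else if y < x then Some (false, (M *m Rmat, (x - y, y)))
  else None.

Fixpoint mss (R : realDomainType) (t : mtt R) (n : nat) : option (mtt R) :=
  match n with
  | 0 => Some t
  | n'.+1 => obind (fun t' => omap snd (max_split t')) (mss t n')
  end.

Definition split_type (R : realDomainType) (t : mtt R) (i : nat) : option bool :=
  obind (fun t' => omap fst (max_split t')) (mss t i).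

Definition Agol_cycle (R : realFieldType) (A : 'M[int]_2) (lam : R)
    (t0 : mtt R) (n m : nat) :=
  (exists v, stable_lamination A v /\ suited_to t0 v) /\
  exists tn, mss t0 n = Some tn /\ mss t0 (n + m) = Some (fA A (scale_mtt lam^-1 tn)).

(* Main.v *)
Require Import Defs.
From mathcomp Require Import all_boot all_order all_algebra.
From mathcomp Require Import ring lra zify.
Import Order.TTheory GRing.Theory Num.Theory.
Local Open Scope ring_scope.

Lemma size_LR (p q : seq nat) : size p = size q ->
  size (LR_word p q) = (sumn p + sumn q)%N.
Proof.
elim: p q => [|a p IH] [|b q] //= [/IH H].
rewrite /LR_word /= rev_cons map_rcons flatten_rcons size_cat -/(LR_word p q) H.
rewrite size_cat !size_nseq /=; lia.
Qed.

Lemma act_mul (R : numFieldType) (M N : 'M[int]_2) (v : R * R) :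
  act (M *m N) v = act M (act N v).
Proof.
case: v => x y; rewrite /act !mxE !big_ord_recr !big_ord0 /= !add0r /=.
have e0 : widen_ord (leqnSn 1) ord_max = 0 :> 'I_2 by apply/val_inj.
have e1 : ord_max = 1 :> 'I_2 by apply/val_inj.
by rewrite e0 e1; congr (_, _); rewrite !intrD !intrM; ring.
Qed.

Lemma act1 (R : numFieldType) (v : R * R) : act 1%:M v = v.
Proof. by case: v => x y; rewrite /act !mxE /= mul1r mul0r addr0 mul0r add0r mul1r. Qed.

Lemma tau0E : tau0 = 1%:M.
Proof. by apply/matrixP => i j; rewrite !mxE; case: i => [[|[|//]] ?]; case: j => [[|[|//]] ?]. Qed.

Lemma matE (A : 'M[int]_2) : tau (A 0 0) (A 1 0) (A 0 1) (A 1 1) = A.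
Proof.
apply/matrixP => i j; rewrite !mxE; case: i => [[|[|//]] ?]; case: j => [[|[|//]] ?] /=;
 congr (A _ _); exact: val_inj.
Qed.

Lemma act_letter (R : numFieldType) (X : bool) (x y : R) :
  act (letter_mat X) (x, y) = if X then (x, x + y) else (x + y, y).
Proof.
by case: X; rewrite /act !mxE /= ?mul1r ?mul0r ?addr0 ?add0r.
Qed.

Lemma act_pos (R : numFieldType) w (x y : R) : 0 < x -> 0 < y ->
  0 < (act (word_mat w) (x, y)).1 /\ 0 < (act (word_mat w) (x, y)).2.
Proof.
move=> hx hy; elim: w => [|X w [IH1 IH2]]; first by rewrite [word_mat [::]]/= act1.
rewrite [word_mat (X :: w)]/= act_mul; case: (act (word_mat w) (x, y)) IH1 IH2 => x' y' /= h1 h2.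
by move: (act_letter R X x' y'); rewrite /act; case: X => /= -[-> ->]; rewrite ?addr_gt0.
Qed.

Lemma split_letter (R : realFieldType) (M : 'M[int]_2) X (v : R * R) :
  0 < v.1 -> 0 < v.2 ->
  max_split (M, act (letter_mat X) v) = Some (X, (M *m letter_mat X, v)).
Proof.
case: v => x y hx hy; rewrite /= in hx hy; rewrite act_letter; case: X => /=.
  rewrite ltrDl hy; congr (Some (_, (_, (_, _)))); ring.
have -> : (x + y < y) = false by apply/negbTE; rewrite -leNgt; lra.
have -> : y < x + y by lra.
congr (Some (_, (_, (_, _)))); ring.
Qed.

Lemma mss_shift (R : realDomainType) (t : mtt R) n :
  mss t n.+1 = obind (fun t' => mss t' n) (omap snd (max_split t)).
Proof.
elim: n t => [|n IH] t; first by rewrite /=; case: (max_split t).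
change (mss t n.+2) with (obind (fun t' => omap snd (max_split t')) (mss t n.+1)).
by rewrite IH; case: (max_split t).
Qed.

Lemma split_type_shift (R : realDomainType) (t : mtt R) n :
  split_type t n.+1 = obind (fun t' => split_type t' n) (omap snd (max_split t)).
Proof.
by rewrite /split_type mss_shift; case: (max_split t).
Qed.

Lemma run (R : realFieldType) w (M : 'M[int]_2) (x y : R) : 0 < x -> 0 < y ->
  mss (M, act (word_mat w) (x, y)) (size w) = Some (M *m word_mat w, (x, y)) /\
  forall i, (i < size w)%N ->
    split_type (M, act (word_mat w) (x, y)) i = Some (nth false w i).
Proof.
move=> hx hy; elim: w M => [|X w IH] M.
  by rewrite [word_mat [::]]/= act1 mulmx1.
have [h1 h2] := act_pos R w x y hx hy.
rewrite [word_mat (X :: w)]/= [size _]/= act_mul mss_shift.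
set m := max_split _.
have Em : m = Some (X, (M *m letter_mat X, act (word_mat w) (x, y))) by exact: split_letter.
have [IH1 IH2] := IH (M *m letter_mat X).
rewrite Em /= IH1 mulmxA; split => // -[|i] hi.
  by change (omap fst m = Some (nth false (X :: w) 0)); rewrite Em.
rewrite split_type_shift.
change (obind (fun t' => split_type t' i) (omap snd m) = Some (nth false (X :: w) i.+1)).
by rewrite Em /= IH2.
Qed.

Lemma mul2E (M N : 'M[int]_2) i j : (M *m N) i j = M i 0 * N 0 j + M i 1 * N 1 j.
Proof.
rewrite mxE !big_ord_recr big_ord0 /= add0r.
have e0 : widen_ord (leqnSn 1) ord_max = 0 :> 'I_2 by apply/val_inj.
have e1 : ord_max = 1 :> 'I_2 by apply/val_inj.
by rewrite e0 e1.
Qed.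

Lemma word_entries w : let W := word_mat w in
  [/\ 0 <= W 0 0, 0 <= W 0 1, 0 <= W 1 0, 0 <= W 1 1 &
      W 0 0 * W 1 1 - W 0 1 * W 1 0 = 1].
Proof.
elim: w => [|X w [h1 h2 h3 h4 h5]] /=; first by rewrite !mxE.
rewrite !mul2E; case: X; rewrite /= /Lmat /Rmat /mat2 !mxE /= !mul1r !mul0r ?addr0 ?add0r;
  split; rewrite ?addr_ge0 //; rewrite -h5; ring.
Qed.

Theorem theorem3p6 (R : realFieldType) (k : nat) (p q : seq nat)
    (A : 'M[int]_2) (lam s : R) :
  (0 < k)%N -> size p = k -> size q = k ->
  all (fun n => 0 < n)%N p -> all (fun n => 0 < n)%N q ->
  A = word_mat (LR_word p q) ->
  1 < lam -> act A (1, s) = (lam * 1, lam * s) ->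
  let l := (sumn p + sumn q)%N in
  let t0 : mtt R := (tau0, (1, s)) in
  (* (1) *)
  (stable_lamination A (carried t0) /\ suited_to t0 (carried t0)) /\
  (* (2) *)
  (forall i, (i < l)%N -> split_type t0 i = Some (nth false (LR_word p q) i)) /\
  mss t0 l = Some (fA A (scale_mtt lam^-1 t0)) /\
  Agol_cycle A lam t0 0 l /\
  omap fst (mss t0 l) = Some (tau (A 0 0) (A 1 0) (A 0 1) (A 1 1)).
Proof.
move=> k0 sp sq _ _ HA hlam Heig l t0.
have [a0 c0 b0 d0 det] := word_entries (LR_word p q).
rewrite -HA in a0 c0 b0 d0 det.
have [e1 e2] : (A 0 0)%:~R * 1 + (A 0 1)%:~R * s = lam * 1 /\
               (A 1 0)%:~R * 1 + (A 1 1)%:~R * s = lam * s :> R.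
  by move: Heig; rewrite /act => -[-> ->].
have spos : 0 < s.
  have detR : (A 0 0)%:~R * (A 1 1)%:~R - (A 0 1)%:~R * (A 1 0)%:~R = 1 :> R.
    by rewrite -!intrM -intrB det.
  have bR : 0 <= (A 1 0)%:~R :> R by rewrite ler0z.
  have cR : 0 <= (A 0 1)%:~R :> R by rewrite ler0z.
  case: (ltrgtP s 0) => [sneg|//|s0].
    have h1 : lam <= (A 0 0)%:~R by nra.
    have h2 : lam <= (A 1 1)%:~R by nra.
    have h3 : ((lam - (A 0 0)%:~R) * (lam - (A 1 1)%:~R) - (A 0 1)%:~R * (A 1 0)%:~R) * s = 0.
      by nra.
    move: h3 => /eqP; rewrite mulf_eq0 (lt_eqF sneg) orbF subr_eq0 => /eqP h3.
    move: hlam h1 h2 h3 detR; clear.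
    set a := (A 0 0)%:~R; set d := (A 1 1)%:~R; set bc := (A 0 1)%:~R * _ => hl h1 h2 h3 detR.
    have E : lam * lam + 1 = (a + d) * lam.
      by rewrite -detR -[bc]h3; ring.
    have H1 : 0 <= (a - lam) * lam by apply: mulr_ge0; lra.
    have H2 : 0 <= (d - lam) * lam by apply: mulr_ge0; lra.
    have H3 : 0 < (lam - 1) * (lam + 1) by apply: mulr_gt0; lra.
    move: E H1 H2 H3; rewrite !mulrBl !mulrDl; lra.
  move: e2 e1; rewrite s0 !mulr0 addr0 mulr1 => /eqP; rewrite intr_eq0 => /eqP b00.
  rewrite b00 mulr0 subr0 in det.
  have dn : A 1 1 != 0 by apply/eqP => h; rewrite h mulr0 in det.
  have d1 : 1 <= A 1 1 by lia.
  have hh : 0 <= A 0 0 * (A 1 1 - 1) by apply: mulr_ge0; lia.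
  have : A 0 0 <= 1 by rewrite mulrBr mulr1 det subr_ge0 in hh.
  rewrite -(ler_int R) => ha; rewrite addr0 mulr1 => ha'; move: ha ha' hlam; clear; rewrite mulr1; lra.
have lpos0 : 0 < lam := lt_trans ltr01 hlam.
have lam0 : lam != 0 by rewrite gt_eqF.
have Ct : carried t0 = (1, s) by rewrite /carried /= tau0E act1.
have Eu : act A (lam^-1 * 1, lam^-1 * s) = (1, s).
  rewrite /act /=; congr (_, _).
    transitivity (lam^-1 * ((A 0 0)%:~R * 1 + (A 0 1)%:~R * s)); first ring.
    by rewrite e1 mulKf.
  transitivity (lam^-1 * ((A 1 0)%:~R * 1 + (A 1 1)%:~R * s)); first ring.
  by rewrite e2 mulKf.
have lpos : 0 < lam^-1 by rewrite invr_gt0.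
have [Hr1 Hr2] := run R (LR_word p q) tau0 (lam^-1 * 1) (lam^-1 * s)
   ltac:(rewrite mulr1 //) ltac:(exact: mulr_gt0).
rewrite -HA Eu size_LR ?sp ?sq // in Hr1 Hr2.
have Hm : mss t0 l = Some (fA A (scale_mtt lam^-1 t0)).
  by rewrite /t0 /l Hr1 /fA /scale_mtt /= tau0E mul1mx mulmx1.
have P1 : stable_lamination A (carried t0) /\ suited_to t0 (carried t0).
  rewrite Ct; split.
    split; first by apply/negP => /eqP [] /eqP; rewrite oner_eq0.
    by exists lam.
  by rewrite /suited_to /= ltr01 spos Ct.
split => //; split; first exact: Hr2.
split => //; split.
  split; first by exists (carried t0).
  by exists t0; split.
by rewrite Hm /= /fA /= tau0E mulmx1 matE.
Qed.
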